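(* Let $E$ be a Banach lattice and let $\mathrm{r\text{-}l\text{-}Lwc}(E)$ denote the set of r-l-Lwc operators $E\to E$. (i) $\mathrm{r\text{-}l\text{-}Lwc}(E)$ is a subalgebra of the algebra $\mathrm{L}_r(E)$ of regular operators on $E$; moreover, $\mathrm{r\text{-}l\text{-}Lwc}(E)=\mathrm{L}_r(E)$ if and only if the identity $I_E$ is limitedly L-weakly compact. (ii) If $E$ is Dedekind complete, then $\mathrm{r\text{-}l\text{-}Lwc}(E)$ is a closed order ideal of the Banach lattice $(\mathrm{L}_r(E),\|\cdot\|_r)$, where $\|T\|_r:=\|\,|T|\,\|$ is the regular norm.
   Context: All vector spaces are real and operators are linear and bounded; $\mathrm{L}_r(E)$ is the space of regular operators on $E$ (differences of positive operators). For a subset $A$ of a Banach lattice $F$, $\mathrm{sol}(A)=\bigcup_{a\in A}[-|a|,|a|]$. A subset $A\subseteq F$ is an Lwc-set if every disjoint sequence in $\mathrm{sol}(A)$ is norm-null. A bounded subset $A$ of a Banach space $X$ is limited if every weak$^\ast$-null sequence in $X'$ converges to $0$ uniformly on $A$. An operator $T:X\to F$ is limitedly L-weakly compact if $T$ maps every limited subset of $X$ onto an Lwc-subset of $F$. An operator $T:E\to E$ is an r-l-Lwc operator if $T=T_1-T_2$ where $T_1,T_2$ are positive limitedly L-weakly compact operators. *)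

(* Defs.v *)
From HB Require Import structures.
From mathcomp Require Import all_boot all_order all_algebra.
From mathcomp Require Import all_classical all_reals topology normedtype sequences.
Set Implicit Arguments. Unset Strict Implicit. Unset Printing Implicit Defensive.
Import Order.TTheory GRing.Theory Num.Theory.
Import numFieldNormedType.Exports.
Local Open Scope ring_scope.
Local Open Scope classical_set_scope.

(** Completeness is provided by taking E : completeNormedModType R. *)
Record BanachLatticeOn (R : realType) (E : normedModType R) := {
  ble : E -> E -> Prop;
  bjoin : E -> E -> E;
  ble_refl : forall x, ble x x;
  ble_antisym : forall x y, ble x y -> ble y x -> x = y;
  ble_trans : forall x y z, ble x y -> ble y z -> ble x z;
  ble_add : forall x y z, ble x y -> ble (x + z) (y + z);
  ble_scale : forall (a : R) x y, 0 <= a -> ble x y -> ble (a *: x) (a *: y);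
  bjoin_ubl : forall x y, ble x (bjoin x y);
  bjoin_ubr : forall x y, ble y (bjoin x y);
  bjoin_least : forall x y z, ble x z -> ble y z -> ble (bjoin x y) z;
  bnorm_monotone : forall x y,
    ble (bjoin x (- x)) (bjoin y (- y)) -> `|x| <= `|y|
}.

Section BL.
Variables (R : realType) (E : normedModType R) (L : BanachLatticeOn E).

Definition labs (x : E) : E := bjoin L x (- x).
Definition bmeet (x y : E) : E := - bjoin L (- x) (- y).

Definition sol (A : set E) : set E :=
  [set y | exists2 a, A a & ble L (- labs a) y /\ ble L y (labs a)].

Definition disjoint_seq (x : nat -> E) : Prop :=
  forall n m, n <> m -> bmeet (labs (x n)) (labs (x m)) = 0.

Definition Lwc_set (A : set E) : Prop :=
  forall x : nat -> E, (forall n, sol A (x n)) -> disjoint_seq x ->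
    (fun n => `|x n|) @ \oo --> (0 : R).

Definition lin_map (V W : normedModType R) (T : V -> W) : Prop :=
  (forall x y, T (x + y) = T x + T y) /\ (forall (a : R) x, T (a *: x) = a *: T x).
Definition bounded_op (V W : normedModType R) (T : V -> W) : Prop :=
  lin_map T /\ exists C : R, forall x, `|T x| <= C * `|x|.

Definition dual_elt (f : E -> R^o) : Prop := bounded_op f.

Definition weakstar_null (f : nat -> E -> R^o) : Prop :=
  (forall n, dual_elt (f n)) /\ forall x, (fun n => f n x) @ \oo --> (0 : R).

Definition limited_set (A : set E) : Prop :=
  (exists C : R, forall a, A a -> `|a| <= C) /\
  forall f : nat -> E -> R^o, weakstar_null f ->
    forall eps : R, 0 < eps -> exists N : nat, forall n, (N <= n)%N ->
      forall a, A a -> `|f n a| <= eps.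

Definition positive_op (T : E -> E) : Prop :=
  forall x, ble L 0 x -> ble L 0 (T x).

Definition limitedly_Lwc (T : E -> E) : Prop :=
  forall A, limited_set A -> Lwc_set (T @` A).

Definition regular_op (T : E -> E) : Prop :=
  exists T1 T2 : E -> E, [/\ bounded_op T1, bounded_op T2, positive_op T1,
    positive_op T2 & T = (fun x => T1 x - T2 x)].

Definition rlLwc (T : E -> E) : Prop :=
  exists T1 T2 : E -> E, [/\ bounded_op T1 /\ bounded_op T2,
    positive_op T1 /\ positive_op T2,
    limitedly_Lwc T1 /\ limitedly_Lwc T2 & T = (fun x => T1 x - T2 x)].

Definition dedekind_complete : Prop :=
  forall A : set E, A !=set0 -> (exists u, forall a, A a -> ble L a u) ->
    exists s, (forall a, A a -> ble L a s) /\
              (forall u, (forall a, A a -> ble L a u) -> ble L s u).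

Definition op_le (S T : E -> E) : Prop := positive_op (fun x => T x - S x).

Definition is_op_modulus (T M : E -> E) : Prop :=
  [/\ regular_op M, op_le T M, op_le (fun x => - T x) M &
      forall U, regular_op U -> op_le T U -> op_le (fun x => - T x) U -> op_le M U].

Definition op_norm (T : E -> E) : R := sup [set `|T x| | x in [set x : E | `|x| <= 1]].

End BL.

(* Main.v *)
Require Import Defs.
From HB Require Import structures.
From mathcomp Require Import all_boot all_order all_algebra.
From mathcomp Require Import all_classical all_reals topology normedtype sequences.
From mathcomp Require Import ring lra.
Import Order.TTheory GRing.Theory Num.Theory.
Import numFieldNormedType.Exports.

Import Order.TTheory GRing.Theory Num.Theory.
Import numFieldNormedType.Exports.
Set Implicit Arguments. Unset Strict Implicit. Unset Printing Implicit Defensive.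
Local Open Scope ring_scope.
Local Open Scope classical_set_scope.

Section Lat.
Variables (R : realType) (E : normedModType R) (L : BanachLatticeOn E).
Local Notation le := (ble L).
Local Notation jn := (bjoin L).
Local Notation mt := (bmeet L).
Local Notation ab := (labs L).

Lemma bref x : le x x. Proof. exact: ble_refl. Qed.
Lemma btr x y z : le x y -> le y z -> le x z. Proof. exact: ble_trans. Qed.
Lemma banti x y : le x y -> le y x -> x = y. Proof. exact: ble_antisym. Qed.

Lemma baddr x y z : le x y -> le (x + z) (y + z). Proof. exact: ble_add. Qed.
Lemma baddl x y z : le x y -> le (z + x) (z + y).
Proof. by move=> h; rewrite ![z + _]addrC; apply: baddr. Qed.
Lemma baddrK x y z : le (x + z) (y + z) -> le x y.
Proof. by move=> /(baddr (- z)); rewrite !addrK. Qed.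
Lemma badd a b c d : le a b -> le c d -> le (a + c) (b + d).
Proof. move=> h1 h2; apply: (btr (baddr c h1)); exact: baddl. Qed.
Lemma bsubP x y : le x y <-> le 0 (y - x).
Proof.
split=> h; first by have := baddr (- x) h; rewrite subrr.
by have := baddr x h; rewrite add0r subrK.
Qed.
Lemma bopp x y : le x y -> le (- y) (- x).
Proof.
move=> h; have := baddr (- x - y) h.
by rewrite addrA subrr add0r addrCA subrr addr0.
Qed.
Lemma boppP x y : le (- y) (- x) <-> le x y.
Proof. split; last exact: bopp. by move/bopp; rewrite !opprK. Qed.
Lemma bscale (a : R) x y : 0 <= a -> le x y -> le (a *: x) (a *: y).
Proof. exact: ble_scale. Qed.
Lemma b0scale (a : R) x : 0 <= a -> le 0 x -> le 0 (a *: x).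
Proof. by move=> ha hx; have := bscale ha hx; rewrite scaler0. Qed.
Lemma b0add x y : le 0 x -> le 0 y -> le 0 (x + y).
Proof. by move=> h1 h2; have := badd h1 h2; rewrite addr0. Qed.
Lemma b0half x : le 0 (x + x) -> le 0 x.
Proof.
move=> h; rewrite (_ : x = 2^-1 *: (x + x)); last first.
  by rewrite -mulr2n -(scaler_nat 2 x) scalerA mulVf ?scale1r // pnatr_eq0.
by apply: b0scale => //; rewrite invr_ge0.
Qed.

Lemma jn_ubl x y : le x (jn x y). Proof. exact: bjoin_ubl. Qed.
Lemma jn_ubr x y : le y (jn x y). Proof. exact: bjoin_ubr. Qed.
Lemma jn_least x y z : le x z -> le y z -> le (jn x y) z. Proof. exact: bjoin_least. Qed.
Lemma jnC x y : jn x y = jn y x.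
Proof. by apply: banti; apply: jn_least; [exact: jn_ubr|exact: jn_ubl|exact: jn_ubr|exact: jn_ubl]. Qed.
Lemma jn_mono x y x' y' : le x x' -> le y y' -> le (jn x y) (jn x' y').
Proof.
move=> h1 h2; apply: jn_least.
  exact: btr h1 (jn_ubl _ _).
exact: btr h2 (jn_ubr _ _).
Qed.
Lemma jn_eq x y : le y x -> jn x y = x.
Proof. by move=> h; apply: banti; [apply: jn_least => //; exact: bref|apply: jn_ubl]. Qed.
Lemma jn_addr x y z : jn x y + z = jn (x + z) (y + z).
Proof.
apply: banti; last by apply: jn_least; apply: baddr; [apply: jn_ubl|apply: jn_ubr].
have h : le (jn x y) (jn (x + z) (y + z) - z).
  apply: jn_least; apply/(baddrK (z := z)); rewrite subrK;
    [apply: jn_ubl|apply: jn_ubr].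
by have := baddr z h; rewrite subrK.
Qed.

Lemma mt_lbl x y : le (mt x y) x.
Proof. by rewrite /bmeet; apply/boppP; rewrite opprK; apply: jn_ubl. Qed.
Lemma mt_lbr x y : le (mt x y) y.
Proof. by rewrite /bmeet; apply/boppP; rewrite opprK; apply: jn_ubr. Qed.
Lemma mt_great x y z : le z x -> le z y -> le z (mt x y).
Proof.
move=> h1 h2; rewrite /bmeet; apply/boppP; rewrite opprK.
by apply: jn_least; apply: bopp.
Qed.
Lemma mtC x y : mt x y = mt y x. Proof. by rewrite /bmeet jnC. Qed.
Lemma mt_mono x y x' y' : le x x' -> le y y' -> le (mt x y) (mt x' y').
Proof.
move=> h1 h2; apply: mt_great.
  exact: btr (mt_lbl _ _) h1.
exact: btr (mt_lbr _ _) h2.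
Qed.
Lemma mt_eq x y : le x y -> mt x y = x.
Proof. by move=> h; apply: banti; [apply: mt_lbl|apply: mt_great => //; exact: bref]. Qed.
Lemma mt_addr x y z : mt x y + z = mt (x + z) (y + z).
Proof. by rewrite /bmeet -[z in LHS]opprK -opprD jn_addr !opprD. Qed.
Lemma mt_addl x y z : z + mt x y = mt (z + x) (z + y).
Proof. by rewrite addrC mt_addr ![z + _]addrC. Qed.
Lemma mt0_pos x y : le 0 x -> le 0 y -> le 0 (mt x y). Proof. exact: mt_great. Qed.

Lemma jn_scale (t : R) x y : 0 < t -> jn (t *: x) (t *: y) = t *: jn x y.
Proof.
move=> t0; apply: banti.
  by apply: jn_least; apply: bscale (ltW t0) _; [exact: jn_ubl|exact: jn_ubr].
have h : le (jn x y) (t^-1 *: jn (t *: x) (t *: y)).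
  have ti : 0 <= t^-1 by rewrite invr_ge0 ltW.
  apply: jn_least.
    by rewrite -[x in le x _](scale1r) -(mulVf (lt0r_neq0 t0)) -scalerA;
      apply: bscale ti (jn_ubl _ _).
  by rewrite -[y in le y _](scale1r) -(mulVf (lt0r_neq0 t0)) -scalerA;
      apply: bscale ti (jn_ubr _ _).
have := bscale (ltW t0) h; rewrite scalerA mulfV ?scale1r //.
exact: lt0r_neq0.
Qed.
Lemma mt_scale (t : R) x y : 0 < t -> mt (t *: x) (t *: y) = t *: mt x y.
Proof. by move=> t0; rewrite /bmeet -!scalerN jn_scale // scalerN. Qed.

Lemma ab_ubl x : le x (ab x). Proof. exact: jn_ubl. Qed.
Lemma ab_ubr x : le (- x) (ab x). Proof. exact: jn_ubr. Qed.
Lemma ab_least x c : le x c -> le (- x) c -> le (ab x) c. Proof. exact: jn_least. Qed.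
Lemma ab_ge0 x : le 0 (ab x).
Proof.
apply: b0half; have := badd (ab_ubl x) (ab_ubr x).
by rewrite subrr.
Qed.
Lemma abN x : ab (- x) = ab x. Proof. by rewrite /labs opprK jnC. Qed.
Lemma ab_pos u : le 0 u -> ab u = u.
Proof.
move=> h; rewrite /labs; apply: jn_eq; apply: (btr (y:=0)) => //.
by have := bopp h; rewrite oppr0.
Qed.
Lemma ab0 : ab 0 = 0. Proof. exact/ab_pos/bref. Qed.
Lemma ab_ab x : ab (ab x) = ab x. Proof. exact/ab_pos/ab_ge0. Qed.
Lemma ab_le x c : le (- c) x -> le x c -> le (ab x) c.
Proof. by move=> h1 h2; apply: ab_least => //; apply/boppP; rewrite opprK. Qed.
Lemma ab_le_inv x c : le (ab x) c -> le (- c) x /\ le x c.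
Proof.
move=> h; split; last exact: btr (ab_ubl x) h.
by apply/boppP; rewrite opprK; apply: btr (ab_ubr x) h.
Qed.
Lemma ab_triangle x y : le (ab (x + y)) (ab x + ab y).
Proof.
apply: ab_least; first exact: badd (ab_ubl _) (ab_ubl _).
rewrite opprD; exact: badd (ab_ubr _) (ab_ubr _).
Qed.
Lemma abZ (t : R) x : ab (t *: x) = `|t| *: ab x.
Proof.
have [t0|t0] := leP 0 t.
  rewrite ger0_norm //; have [->|tp] := eqVneq t 0.
    by rewrite !scale0r ab0.
  by rewrite /labs -scalerN jn_scale // lt0r tp t0.
rewrite ltr0_norm // -abN -scaleNr /labs -scalerN jn_scale //.
by rewrite oppr_gt0.
Qed.
Lemma bnorm_mono_ab x y : le (ab x) (ab y) -> `|x| <= `|y|.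
Proof. exact: bnorm_monotone. Qed.
Lemma bnorm_ab x : `| ab x | = `| x |.
Proof.
apply/eqP; rewrite eq_le; apply/andP; split; apply: bnorm_mono_ab;
  rewrite ab_ab; exact: bref.
Qed.
Lemma bnorm_mono u v : le 0 u -> le u v -> `|u| <= `|v|.
Proof.
move=> h1 h2; apply: bnorm_mono_ab.
rewrite ab_pos // ab_pos //; exact: btr h1 h2.
Qed.
Lemma bnorm_le_ab x c : le (ab x) c -> `|x| <= `|c|.
Proof.
move=> h; rewrite -bnorm_ab; apply: bnorm_mono h; exact: ab_ge0.
Qed.

Lemma riesz u v w : le 0 u -> le 0 v -> le 0 w -> le u (v + w) ->
  [/\ le 0 (u - mt u v), le (u - mt u v) u & le (u - mt u v) w].
Proof.
move=> hu hv hw huvw; split.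
- by apply/(bsubP (mt u v) u); exact: mt_lbl.
- apply/(bsubP (u - mt u v) u); rewrite opprB addrCA subrr addr0.
  exact: mt0_pos.
- rewrite /bmeet opprK addrC jn_addr addNr.
  apply: jn_least => //.
  by have := baddl (- v) huvw; rewrite addKr.
Qed.

Lemma mt_subadd a b w : le 0 a -> le 0 b -> le 0 w ->
  le (mt (a + b) w) (mt a w + mt b w).
Proof.
move=> ha hb hw.
have h1 : le (mt (a + b) w) (mt (a + mt b w) w).
  apply: mt_great; last exact: mt_lbr.
  rewrite mt_addl; apply: mt_great; first exact: mt_lbl.
  apply: btr (mt_lbr _ _) _.
  by have := baddr w ha; rewrite add0r.
apply: (btr h1); rewrite mt_addr; apply: mt_mono; first exact: bref.
by have := baddl w (mt0_pos hb hw); rewrite addr0.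
Qed.

Lemma mt_disj a b r s : le 0 a -> le 0 b -> 0 <= r -> 0 <= s -> mt a b = 0 ->
  mt (r *: a) (s *: b) = 0.
Proof.
move=> ha hb hr hs hab; apply: banti; last first.
  by apply: mt0_pos; apply: b0scale.
have [rs0|rs0] := eqVneq (r + s) 0.
  have r0 : r = 0.
    by move/eqP: rs0; rewrite (paddr_eq0 hr hs) => /andP[/eqP]. 
  rewrite r0 scale0r; exact: mt_lbl.
have rsp : 0 < r + s by rewrite lt0r rs0 addr_ge0.
have : le (mt (r *: a) (s *: b)) (mt ((r + s) *: a) ((r + s) *: b)).
  apply: mt_mono.
    apply/(bsubP (r *: a)); rewrite -scalerBl addrAC subrr add0r.
    exact: b0scale.
  apply/(bsubP (s *: b)); rewrite -scalerBl addrK.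
  exact: b0scale.
by rewrite mt_scale // hab scaler0.
Qed.
End Lat.
Arguments bref {R E L}. Arguments ab_ge0 {R E L}. Arguments abN {R E L}.
Arguments ab0 {R E L}. Arguments ab_ab {R E L}. Arguments ab_ubl {R E L}.
Arguments ab_ubr {R E L}. Arguments jn_ubl {R E L}. Arguments jn_ubr {R E L}.
Arguments jnC {R E L}. Arguments mt_lbl {R E L}. Arguments mt_lbr {R E L}.
Arguments mtC {R E L}. Arguments mt_addr {R E L}. Arguments mt_addl {R E L}.
Arguments jn_addr {R E L}. Arguments ab_triangle {R E L}. Arguments abZ {R E L}.
Arguments bnorm_ab {R E L}.
Arguments bsubP {R E L}. Arguments boppP {R E L}.
Lemma bsub1 (R : realType) (E : normedModType R) (L : BanachLatticeOn E) (x y : E) :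
  ble L x y -> ble L 0 (y - x).
Proof. exact: (proj1 (bsubP x y)). Qed.
Lemma bsub2 (R : realType) (E : normedModType R) (L : BanachLatticeOn E) (x y : E) :
  ble L 0 (y - x) -> ble L x y.
Proof. exact: (proj2 (bsubP x y)). Qed.

Import Order.TTheory GRing.Theory Num.Theory.
Import numFieldNormedType.Exports.
Set Implicit Arguments. Unset Strict Implicit. Unset Printing Implicit Defensive.
Local Open Scope ring_scope.
Local Open Scope classical_set_scope.

Lemma cvg0P (R : realType) (u : nat -> R) : (u @ \oo --> (0:R)) <->
  (forall eps, 0 < eps -> exists N, forall n, (N <= n)%N -> `|u n| <= eps).
Proof.
split.
  move/cvgr0Pnorm_le => h eps e0; have [N _ hN] := h eps e0.
  by exists N => n; apply: hN.
move=> h; apply/cvgr0Pnorm_le => eps e0; have [N hN] := h eps e0.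
by exists N => // n; apply: hN.
Qed.

Section Ea.
Variables (R : realType) (E : normedModType R) (L : BanachLatticeOn E).
Local Notation le := (ble L).
Local Notation mt := (bmeet L).
Local Notation ab := (labs L).

Definition Ea (z : E) := Lwc_set L [set z].

Lemma sol1P z y : sol L [set z] y <-> le (ab y) (ab z).
Proof.
split; first by move=> [a -> [h1 h2]]; apply: ab_le.
by move=> h; exists z => //; apply: ab_le_inv.
Qed.

Lemma disj_sub (x s : nat -> E) : disjoint_seq L x ->
  (forall n, le 0 (s n) /\ le (s n) (ab (x n))) -> disjoint_seq L s.
Proof.
move=> hx hs n m nm; rewrite !ab_pos; try by case: (hs n); try case: (hs m).
apply: banti; last by apply: mt0_pos; [case: (hs n)|case: (hs m)].
rewrite -(hx n m nm); apply: mt_mono; [case: (hs n)|case: (hs m)] => //.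
Qed.

Lemma dec (x : nat -> E) a b : disjoint_seq L x ->
  (forall n, le (ab (x n)) (ab a + ab b)) ->
  exists s t : nat -> E, [/\ (forall n, sol L [set a] (s n)), disjoint_seq L s,
     (forall n, le 0 (t n) /\ le (t n) (ab b)), disjoint_seq L t &
     forall n, `|x n| <= `|s n| + `|t n|].
Proof.
move=> hx hab.
pose s n := mt (ab (x n)) (ab a); pose t n := ab (x n) - s n.
have hr n := riesz (ab_ge0 (x n)) (ab_ge0 a) (ab_ge0 b) (hab n).
have hs n : le 0 (s n) /\ le (s n) (ab (x n)).
  by split; [apply: mt0_pos; exact: ab_ge0|exact: mt_lbl].
exists s, t; split.
- move=> n; apply/sol1P; rewrite ab_pos; [exact: mt_lbr|by case: (hs n)].
- exact: (disj_sub hx hs).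
- by move=> n; case: (hr n) => h1 _ h3; split.
- by apply: (disj_sub hx) => n; case: (hr n) => h1 h2 _; split.
- move=> n; rewrite -(bnorm_ab (L:=L) (x n)) (_ : ab (x n) = s n + t n); last by rewrite addrC subrK.
  exact: ler_normD.
Qed.

Lemma Ea0 : Ea 0.
Proof.
move=> x hx _; apply/cvg0P => eps e0; exists 0%N => n _.
have /sol1P := hx n; rewrite ab0 => h.
have : `|x n| <= `|0 : E| by exact: bnorm_le_ab h.
by rewrite normr0 normr_id => /le_trans; apply; exact: ltW.
Qed.

Lemma Ea_solid y z : le (ab y) (ab z) -> Ea z -> Ea y.
Proof.
move=> hyz hz x hx hd; apply: hz => // n.
by apply/sol1P; apply: btr hyz; apply/sol1P.
Qed.

Lemma EaN u : Ea u -> Ea (- u).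
Proof. by apply: Ea_solid; rewrite abN; exact: bref. Qed.
Lemma Ea_ab u : Ea u -> Ea (ab u).
Proof. by apply: Ea_solid; rewrite ab_ab; exact: bref. Qed.
Lemma Ea_abK u : Ea (ab u) -> Ea u.
Proof. by apply: Ea_solid; rewrite ab_ab; exact: bref. Qed.

Lemma Ea_approx w : (forall d : R, 0 < d -> exists a m, [/\ Ea a,
   le (ab w) (ab a + ab m) & `|m| <= d]) -> Ea w.
Proof.
move=> h x hx hd; apply/cvg0P => eps e0.
have e2 : 0 < eps / 2 by rewrite divr_gt0.
have [a [m [ha hw hm]]] := h _ e2.
have hx' n : le (ab (x n)) (ab a + ab m).
  by apply: btr hw; apply/sol1P.
have [s [t [hs hsd ht htd hn]]] := dec hd hx'.
have /cvg0P/(_ _ e2) [N hN] := ha s hs hsd.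
exists N => n nN; rewrite normr_id; apply: le_trans (hn n) _.
rewrite [eps](splitr eps); apply: lerD.
  by have := hN n nN; rewrite normr_id.
apply: le_trans hm; rewrite -(bnorm_ab (L:=L) m); case: (ht n) => h1 h2; exact: bnorm_mono h1 h2.
Qed.

Lemma Ea_add u v : Ea u -> Ea v -> Ea (u + v).
Proof.
move=> hu hv x hx hd; apply/cvg0P => eps e0.
have e2 : 0 < eps / 2 by rewrite divr_gt0.
have hx' n : le (ab (x n)) (ab u + ab v).
  by apply: btr (ab_triangle _ _); apply/sol1P.
have [s [t [hs hsd ht htd hn]]] := dec hd hx'.
have /cvg0P/(_ _ e2) [N1 hN1] := hu s hs hsd.
have ht' n : sol L [set v] (t n).
  by apply/sol1P; rewrite ab_pos; case: (ht n).
have /cvg0P/(_ _ e2) [N2 hN2] := hv t ht' htd.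
exists (maxn N1 N2) => n; rewrite geq_max => /andP[n1 n2].
rewrite normr_id; apply: le_trans (hn n) _.
rewrite [eps](splitr eps); apply: lerD.
  by have := hN1 n n1; rewrite normr_id.
by have := hN2 n n2; rewrite normr_id.
Qed.

Lemma Ea_sub u v : Ea u -> Ea v -> Ea (u - v).
Proof. by move=> hu hv; apply: Ea_add => //; apply: EaN. Qed.

Lemma Ea_scale (c : R) u : Ea u -> Ea (c *: u).
Proof.
move=> hu; have [->|c0] := eqVneq c 0; first by rewrite scale0r; exact: Ea0.
have cp : 0 < `|c| by rewrite normr_gt0.
move=> x hx hd.
pose y n := `|c|^-1 *: x n.
have hy n : sol L [set u] (y n).
  apply/sol1P; have /sol1P := hx n; rewrite abZ /y abZ => h.
  rewrite ger0_norm ?invr_ge0 //.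
  have := bscale (a := `|c|^-1) (ltW _) h; rewrite scalerA mulVf ?scale1r.
    by apply; rewrite invr_gt0.
  by rewrite normr_eq0.
have hyd : disjoint_seq L y.
  move=> n m nm; rewrite /y !abZ ger0_norm ?invr_ge0 ?ltW //.
  by rewrite mt_scale ?invr_gt0 // hd // scaler0.
have := hu y hy hyd; rewrite /y.
under eq_fun do rewrite normrZ normfV normr_id.
move/cvg0P => h; apply/cvg0P => eps e0.
have [N hN] := h (eps / `|c|) (divr_gt0 e0 cp); exists N => n nN.
have := hN n nN; rewrite normr_id ger0_norm ?mulr_ge0 ?invr_ge0 // => hh.
rewrite (_ : `|x n| = `|c| * (`|c|^-1 * `|x n|)); last first.
  by rewrite mulrA mulfV ?mul1r // normr_eq0.
have cip : 0 < `|c|^-1 by rewrite invr_gt0.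
rewrite -(ler_pM2l cip) mulrA mulVf ?mul1r ?normr_eq0 //.
by rewrite [_ * eps]mulrC.
Qed.

End Ea.

Import Order.TTheory GRing.Theory Num.Theory.
Set Implicit Arguments. Unset Strict Implicit. Unset Printing Implicit Defensive.
Local Open Scope ring_scope.
Local Open Scope classical_set_scope.

Section HahnBanach.
Variables (R : realType) (V : lmodType R) (p : V -> R).
Hypothesis hp_add : forall x y, p (x + y) <= p x + p y.
Hypothesis hp_scale : forall (t : R) x, 0 <= t -> p (t *: x) = t * p x.

Lemma p0 : p 0 = 0.
Proof. by rewrite -(scale0r (0 : V)) hp_scale // mul0r. Qed.

Lemma p_lowbound (t : R) x : t < 0 -> t * p x <= p (t *: x).
Proof.
move=> t0; have h := hp_add (t *: x) ((- t) *: x).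
rewrite -scalerDl subrr scale0r p0 in h.
rewrite (@hp_scale (-t)) in h; last by rewrite oppr_ge0 ltW.
by rewrite mulNr subr_ge0 in h.
Qed.

Definition Qg (G : set (V * R)) :=
  [/\ forall x r s, G (x, r) -> G (x, s) -> r = s,
      forall x r y s, G (x, r) -> G (y, s) -> G (x + y, r + s),
      forall a x r, G (x, r) -> G (a *: x, a * r) &
      forall x r, G (x, r) -> r <= p x].

Variable v : V.
Definition G0 : set (V * R) := [set z | exists t : R, z = (t *: v, t * p v)].

Lemma QG0 : Qg G0.
Proof.
split.
- move=> x r s [t [-> ->]] [t' [e ->]].
  have [v0|v0] := eqVneq v 0; first by rewrite v0 p0 !mulr0.
  have : (t - t') *: v = 0 by rewrite scalerBl e subrr.
  by move/eqP; rewrite scaler_eq0 (negbTE v0) orbF subr_eq0 => /eqP ->.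
- move=> x r y s [t [-> ->]] [t' [-> ->]]; exists (t + t').
  by rewrite scalerDl mulrDl.
- move=> a x r [t [-> ->]]; exists (a * t).
  by rewrite scalerA mulrA.
- move=> x r [t [-> ->]].
  have [t0|t0] := leP 0 t; first by rewrite hp_scale.
  exact: p_lowbound.
Qed.

Definition Pg (G : set (V * R)) := Qg (G `|` G0).

Lemma Qg_common (U : set (V * R)) :
  (forall z1 z2, U z1 -> U z2 -> exists S, [/\ Qg S, S z1, S z2 & S `<=` U]) ->
  Qg U.
Proof.
move=> hc; split.
- move=> x r s h1 h2; have [S [[f _ _ _] s1 s2 _]] := hc _ _ h1 h2.
  exact: f s1 s2.
- move=> x r y s h1 h2; have [S [[_ a _ _] s1 s2 SU]] := hc _ _ h1 h2.
  exact/SU/a.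
- move=> a x r h1; have [S [[_ _ sc _] s1 _ SU]] := hc _ _ h1 h1.
  exact/SU/sc.
- move=> x r h1; have [S [[_ _ _ d] s1 _ SU]] := hc _ _ h1 h1.
  exact: d.
Qed.

Lemma chainP (F : set (set (V * R))) : F `<=` Pg -> total_on F subset ->
  Pg (\bigcup_(X in F) X).
Proof.
move=> FP Ftot; apply: Qg_common => z1 z2 h1 h2.
have sub1 X : F X -> X `|` G0 `<=` (\bigcup_(X in F) X) `|` G0.
  by move=> FX z [Xz|Gz]; [left; exists X|right].
case: h1 => [[X1 FX1 z1X]|z1G]; case: h2 => [[X2 FX2 z2X]|z2G].
- have [X12|X21] := Ftot _ _ FX1 FX2.
    by exists (X2 `|` G0); split; [exact: FP|left; exact: X12|left|exact: sub1].
  by exists (X1 `|` G0); split; [exact: FP|left|left; exact: X21|exact: sub1].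
- by exists (X1 `|` G0); split; [exact: FP|left|right|exact: sub1].
- by exists (X2 `|` G0); split; [exact: FP|right|left|exact: sub1].
- by exists G0; split; [exact: QG0|done|done|move=> z Gz; right].
Qed.

Section Ext.
Variable H : set (V * R).
Hypothesis QH : Qg H.
Hypothesis G0H : G0 `<=` H.
Variable x0 : V.
Hypothesis nx0 : forall r, ~ H (x0, r).

Lemma H00 : H (0, 0).
Proof. by apply: G0H; exists 0; rewrite scale0r mul0r. Qed.

Definition S := [set y | exists d r, H (d, r) /\ y = r - p (d - x0)].
Definition c := sup S.

Lemma S_ub d' r' : H (d', r') -> ubound S (p (d' + x0) - r').
Proof.
move=> h' y [d [r [hd ->]]].
case: QH => _ ad _ dom.
have := dom _ _ (ad _ _ _ _ hd h').
rewrite lerBrDr addrAC lerBlDr => hh.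
apply: le_trans hh _; rewrite [p (d' + x0) + _]addrC.
have -> : d + d' = (d - x0) + (d' + x0) by rewrite addrACA addNr addr0.
exact: hp_add.
Qed.

Lemma S_has_sup : has_sup S.
Proof.
split; first by exists (0 - p (0 - x0)), 0, 0; split => //; exact: H00.
by exists (p (0 + x0) - 0); apply: S_ub; exact: H00.
Qed.

Lemma c_lb d r : H (d, r) -> r - p (d - x0) <= c.
Proof. by move=> h; apply: sup_upper_bound S_has_sup _ _; exists d, r. Qed.

Lemma c_ub d r : H (d, r) -> c <= p (d + x0) - r.
Proof.
move=> h; apply: ge_sup; first by case: S_has_sup.
exact: S_ub.
Qed.

Definition Hx : set (V * R) :=
  [set z | exists d r (t : R), H (d, r) /\ z = (d + t *: x0, r + t * c)].

Lemma QHx : Qg Hx.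
Proof.
case: QH => fH aH sH dH.
split.
- move=> x r s [d [r1 [t [hd [ex ->]]]]] [d' [r1' [t' [hd' [ex' ->]]]]].
  have ett : t = t'.
    apply/eqP; apply/negPn/negP => tt.
    have e1 : (t - t') *: x0 = d' - d.
      have e : d + t *: x0 = d' + t' *: x0 by rewrite -ex -ex'.
      by rewrite scalerBl -[t *: x0](addKr d) e addrA addrK addrC.
    have hm : H (d' - d, r1' - r1).
      by apply: aH => //; rewrite -scaleN1r -[- r1]mulN1r; apply: sH.
    apply: (@nx0 ((t - t')^-1 * (r1' - r1))).
    rewrite (_ : x0 = (t - t')^-1 *: (d' - d)); first exact: sH.
    by rewrite -e1 scalerA mulVf ?scale1r // subr_eq0.
  move: ex'; rewrite ex ett => /addIr edd; rewrite edd in hd.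
  by rewrite (fH _ _ _ hd hd').
- move=> x r y s [d [r1 [t [hd [-> ->]]]]] [d' [r1' [t' [hd' [-> ->]]]]].
  exists (d + d'), (r1 + r1'), (t + t'); split; first exact: aH.
  by rewrite scalerDl mulrDl !addrA [d + _ + d']addrAC [r1 + _ + r1']addrAC.
- move=> a x r [d [r1 [t [hd [-> ->]]]]].
  exists (a *: d), (a * r1), (a * t); split; first exact: sH.
  by rewrite scalerDr mulrDr scalerA mulrA.
- move=> x r [d [r1 [t [hd [-> ->]]]]] /=.
  have [t0|t0|->] := ltgtP t 0; last by rewrite scale0r mul0r !addr0; exact: dH hd.
  +
    have s0 : 0 < - t by rewrite oppr_gt0.
    have h := c_lb (sH (- t)^-1 _ _ hd).
    rewrite (_ : (- t)^-1 *: d - x0 = (- t)^-1 *: (d + t *: x0)) in h; last first.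
      rewrite scalerDr scalerA (_ : (-t)^-1 * t = -1) ?scaleN1r //.
      by rewrite invrN mulNr mulVf ?lt_eqF.
    rewrite (@hp_scale ((-t)^-1)) in h; last by rewrite invr_ge0 ltW.
    rewrite -mulrBr -(ler_pM2l s0) mulrA mulfV ?oppr_eq0 ?lt_eqF // mul1r in h.
    move: h; set P := p _; move=> h; nra.
  +
    have h := c_ub (sH t^-1 _ _ hd).
    rewrite (_ : t^-1 *: d + x0 = t^-1 *: (d + t *: x0)) in h; last first.
      by rewrite scalerDr scalerA mulVf ?gt_eqF // scale1r.
    rewrite (@hp_scale (t^-1)) in h; last by rewrite invr_ge0 ltW.
    rewrite -mulrBr -(ler_pM2l t0) mulrA mulfV ?gt_eqF // mul1r in h.
    move: h; set P := p _; move=> h; nra.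
Qed.

End Ext.

Theorem hahn_banach : exists f : V -> R,
  [/\ forall x y, f (x + y) = f x + f y, forall (a : R) x, f (a *: x) = a * f x,
      forall x, f x <= p x & f v = p v].
Proof.
have [A [PA Amax]] := Zorn_bigcup chainP.
pose H := A `|` G0.
have QH : Qg H by [].
have G0H : G0 `<=` H by move=> z; right.
have tot : forall x, exists r, H (x, r).
  move=> x0; apply: contrapT => hn.
  have nx0 r : ~ H (x0, r) by move=> h; apply: hn; exists r.
  have QX := QHx QH G0H nx0.
  have HX : H `<=` Hx H x0.
    by move=> [x r] h; exists x, r, 0; split => //; rewrite scale0r mul0r !addr0.
  apply: (Amax (Hx H x0)).
    split; first by move=> z Az; apply: HX; left.
    move=> sub; apply: (nx0 (c H x0)).
    suff : Hx H x0 (x0, c H x0).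
      by move/sub => h; left.
    exists 0, 0, 1; split; first exact: H00.
    by rewrite add0r scale1r add0r mul1r.
  rewrite /Pg setUidl //; apply: subset_trans HX; exact: G0H.
have [f hf] := choice tot.
case: QH => fH aH sH dH.
exists f; split.
- by move=> x y; apply: fH (hf (x + y)) (aH _ _ _ _ (hf x) (hf y)).
- by move=> a x; apply: fH (hf (a *: x)) (sH a _ _ (hf x)).
- by move=> x; apply: dH (hf x).
- apply: fH (hf v) _; apply: G0H; exists 1.
  by rewrite scale1r mul1r.
Qed.

End HahnBanach.

Import Order.TTheory GRing.Theory Num.Theory.
Import numFieldNormedType.Exports.
Set Implicit Arguments. Unset Strict Implicit. Unset Printing Implicit Defensive.
Local Open Scope ring_scope.
Local Open Scope classical_set_scope.

Section Key.
Variables (R : realType) (E : normedModType R) (L : BanachLatticeOn E).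
Local Notation le := (ble L).
Local Notation mt := (bmeet L).
Local Notation ab := (labs L).

Definition Sw (w y : E) : set R :=
  [set z | exists2 r : R, 0 < r & z = `|mt (ab y) (r *: w)|].
Definition pw w y := sup (Sw w y).

Variable w : E.
Hypothesis w0 : le 0 w.

Lemma mtw_ge0 y r : 0 < r -> le 0 (mt (ab y) (r *: w)).
Proof. by move=> r0; apply: mt0_pos; [exact: ab_ge0|exact: b0scale (ltW r0) w0]. Qed.

Lemma Sw_ne y : Sw w y !=set0.
Proof. by exists `|mt (ab y) (1 *: w)|, 1. Qed.

Lemma Sw_ub y : ubound (Sw w y) `|y|.
Proof.
move=> z [r r0 ->]; rewrite -(bnorm_ab (L:=L) y).
apply: bnorm_mono; [exact: mtw_ge0|exact: mt_lbl].
Qed.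

Lemma Sw_sup y : has_sup (Sw w y).
Proof. by split; [exact: Sw_ne|exists `|y|; exact: Sw_ub]. Qed.

Lemma pw_le y : pw w y <= `|y|.
Proof. by apply: ge_sup; [exact: Sw_ne|exact: Sw_ub]. Qed.

Lemma pw_ge y r : 0 < r -> `|mt (ab y) (r *: w)| <= pw w y.
Proof. by move=> r0; apply: sup_upper_bound; [exact: Sw_sup|exists r]. Qed.

Lemma pw_ge0 y : 0 <= pw w y.
Proof. exact: le_trans (normr_ge0 _) (pw_ge y ltr01). Qed.

Lemma pw_add x y : pw w (x + y) <= pw w x + pw w y.
Proof.
apply: ge_sup; first exact: Sw_ne.
move=> z [r r0 ->].
have h1 : le (mt (ab (x + y)) (r *: w)) (mt (ab x) (r *: w) + mt (ab y) (r *: w)).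
  apply: btr (mt_subadd (ab_ge0 x) (ab_ge0 y) (b0scale (ltW r0) w0)).
  apply: mt_mono; [exact: ab_triangle|exact: bref].
apply: le_trans (bnorm_mono (mtw_ge0 _ r0) h1) _.
apply: le_trans (ler_normD _ _) _.
by apply: lerD; apply: pw_ge.
Qed.

Lemma pw_scale (t : R) y : 0 <= t -> pw w (t *: y) = t * pw w y.
Proof.
move=> t0; have [->|tn0] := eqVneq t 0.
  rewrite mul0r scale0r; apply/eqP; rewrite eq_le pw_ge0 andbT.
  apply: ge_sup; first exact: Sw_ne.
  move=> z [r r0 ->]; rewrite ab0 mt_eq ?normr0 //.
  exact: b0scale (ltW r0) w0.
have tp : 0 < t by rewrite lt0r tn0.
apply/eqP; rewrite eq_le; apply/andP; split.
  apply: ge_sup; first exact: Sw_ne.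
  move=> z [r r0 ->].
  rewrite abZ ger0_norm // (_ : r *: w = t *: ((r / t) *: w)); last first.
    by rewrite scalerA mulrCA mulfV ?mulr1.
  rewrite mt_scale // normrZ ger0_norm //.
  by rewrite ler_pM2l //; apply: pw_ge; rewrite divr_gt0.
rewrite -ler_pdivlMl //; apply: ge_sup; first exact: Sw_ne.
move=> z [r r0 ->]; rewrite ler_pdivlMl //.
have -> : t * `|mt (ab y) (r *: w)| = `|mt (ab (t *: y)) ((t * r) *: w)|.
  by rewrite abZ ger0_norm // -scalerA mt_scale // normrZ ger0_norm.
by apply: pw_ge; rewrite mulr_gt0.
Qed.

Lemma pwN y : pw w (- y) = pw w y.
Proof. by rewrite /pw /Sw abN. Qed.

End Key.

Section Key2.
Variables (R : realType) (E : normedModType R) (L : BanachLatticeOn E).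
Local Notation le := (ble L).
Local Notation mt := (bmeet L).
Local Notation ab := (labs L).

Lemma lin0 (T : E -> E) : lin_map T -> T 0 = 0.
Proof.
case=> hadd _; have := hadd 0 0; rewrite addr0 => h.
by apply: (addrI (T 0)); rewrite addr0 -h.
Qed.
Lemma linN (T : E -> E) x : lin_map T -> T (- x) = - T x.
Proof. by case=> _ hs; rewrite -scaleN1r hs scaleN1r. Qed.
Lemma linB (T : E -> E) x y : lin_map T -> T (x - y) = T x - T y.
Proof. by move=> h; case: (h) => ha _; rewrite ha linN. Qed.

Lemma limited1 (x : E) : limited_set [set x].
Proof.
split; first by exists `|x| => a ->.
move=> f [_ hf] eps e0; have /cvg0P/(_ _ e0) [N hN] := hf x.
by exists N => n nN a ->; apply: hN.
Qed.

Lemma LL_Ea (T : E -> E) (x : E) : limitedly_Lwc L T -> Ea L (T x).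
Proof.
move=> h; have := h _ (limited1 x).
by rewrite image_set1.
Qed.

Lemma Ea_LL (T : E -> E) : bounded_op T -> (forall x, Ea L (T x)) ->
  limitedly_Lwc L T.
Proof.
move=> [hT [C hC]] hEa A [_ hA] x hx hd.
have ha : forall n, exists a, A a /\ le (ab (x n)) (ab (T a)).
  move=> n; have [_ [a Aa <-] [h1 h2]] := hx n.
  by exists a; split => //; apply: ab_le.
have [a hav] := choice ha.
have hphi : forall n, exists phi : E -> R,
    [/\ forall u v, phi (u + v) = phi u + phi v, forall (c : R) u, phi (c *: u) = c * phi u,
        forall u, phi u <= pw L (ab (x n)) u & phi (T (a n)) = pw L (ab (x n)) (T (a n))].
  move=> n; apply: hahn_banach.
    exact: pw_add (ab_ge0 _).
  move=> t u t0; exact: (@pw_scale _ _ L _ (ab_ge0 (x n)) t u t0).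
have [phi hph] := choice hphi.
have phi_abs n u : `|phi n u| <= pw L (ab (x n)) u.
  case: (hph n) => _ hs hle _; rewrite ler_norml hle andbT.
  have := hle (- u); rewrite pwN -scaleN1r hs mulN1r => hh.
  by rewrite lerNl.
pose g n := fun y : E => (phi n (T y) : R^o).
have hg : weakstar_null g.
  split.
    move=> n; split.
      case: (hph n) => hadd hs _ _; case: hT => Tadd Ts.
      by split => [u v|c u]; rewrite /g ?Tadd ?hadd ?Ts ?hs.
    exists (Num.max C 0) => y; rewrite /g.
    apply: le_trans (phi_abs n _) _; apply: le_trans (pw_le (ab_ge0 _) _) _.
    apply: le_trans (hC y) _; apply: ler_wpM2r => //; by rewrite le_max lexx.
  move=> y; apply/cvg0P => eps e0.
  have hr : forall n, exists2 r : R, 0 < r &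
      pw L (ab (x n)) (T y) <= 2 * `|mt (ab (T y)) (r *: ab (x n))|.
    move=> n; have [p0|pp] := eqVneq (pw L (ab (x n)) (T y)) 0.
      by exists 1 => //; rewrite p0 mulr_ge0.
    have pp' : 0 < pw L (ab (x n)) (T y) / 2.
      by rewrite divr_gt0 // lt0r pp pw_ge0 //; exact: ab_ge0.
    have := sup_adherent pp' (Sw_sup (L:=L) (ab_ge0 (x n)) (T y)).
    move=> [z [r r0 ez] hz]; rewrite ez -/(pw L _ _) in hz.
    exists r => //; lra.
  have hr2 : forall n, exists r : R, 0 < r /\
      pw L (ab (x n)) (T y) <= 2 * `|mt (ab (T y)) (r *: ab (x n))|.
    by move=> n; case: (hr n) => r ? ?; exists r.
  have [r hr'] := choice hr2.
  pose u n := mt (ab (T y)) (r n *: ab (x n)).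
  have hu0 n : le 0 (u n) by apply: mtw_ge0; [exact: ab_ge0|case: (hr' n)].
  have hu : forall n, sol L [set T y] (u n).
    by move=> n; apply/sol1P; rewrite ab_pos //; exact: mt_lbl.
  have hud : disjoint_seq L u.
    move=> n m nm; rewrite !ab_pos //; apply: banti; last exact: mt0_pos.
    apply: btr (mt_mono (mt_lbr _ _) (mt_lbr _ _)) _.
    rewrite (mt_disj (ab_ge0 _) (ab_ge0 _) _ _ (hd n m nm)); first exact: bref.
      by case: (hr' n) => /ltW.
    by case: (hr' m) => /ltW.
  have /cvg0P hc := hEa y u hu hud.
  have e2 : 0 < eps / 2 by rewrite divr_gt0.
  have [N hN] := hc (eps / 2) e2.
  exists N => n nN; rewrite /g.
  apply: le_trans (phi_abs n _) _; case: (hr' n) => _ hh.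
  apply: le_trans hh _; have := hN n nN; rewrite normr_id -/(u n) => hh'.
  lra.
apply/cvg0P => eps e0; have [N hN] := hA g hg eps e0.
exists N => n nN; rewrite normr_id.
have h1 : `|x n| <= pw L (ab (x n)) (T (a n)).
  have := pw_ge (L:=L) (ab_ge0 (x n)) (T (a n)) ltr01.
  rewrite scale1r mtC mt_eq ?bnorm_ab //; by case: (hav n).
apply: le_trans h1 _; case: (hph n) => _ _ _ <-.
apply: le_trans (hN n nN (a n) _); first exact: ler_norm.
by case: (hav n).
Qed.

End Key2.

Import Order.TTheory GRing.Theory Num.Theory.
Import numFieldNormedType.Exports.
Set Implicit Arguments. Unset Strict Implicit. Unset Printing Implicit Defensive.
Local Open Scope ring_scope.
Local Open Scope classical_set_scope.

Lemma zt1 (V : zmodType) (a b : V) : a - (a - b) = b.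
Proof. by rewrite opprB addrCA subrr addr0. Qed.
Lemma zt2 (V : zmodType) (a b : V) : (b + b) - (a + a) = (b - a) + (b - a).
Proof. by rewrite opprD addrACA. Qed.
Lemma zt3 (V : zmodType) (a y : V) : (a + y) - (a - y) = y + y.
Proof. by rewrite opprB addrA addrAC [a + y]addrC addrK. Qed.
Lemma zt4 (V : zmodType) (a b c d : V) : (a - b) + (c - d) = (a + c) - (b + d).
Proof. by rewrite opprD addrACA. Qed.

Section Ops.
Variables (R : realType) (E : normedModType R) (L : BanachLatticeOn E).
Local Notation le := (ble L).
Local Notation mt := (bmeet L).
Local Notation ab := (labs L).
Implicit Types S T U M : E -> E.

Lemma bounded_pos T : bounded_op T ->
  exists C : R, 0 <= C /\ forall x, `|T x| <= C * `|x|.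
Proof.
move=> [_ [C hC]]; exists (Num.max C 0); split; first by rewrite le_max lexx orbT.
move=> x; apply: le_trans (hC x) _; apply: ler_wpM2r => //.
by rewrite le_max lexx.
Qed.

Lemma bounded_add S T : bounded_op S -> bounded_op T ->
  bounded_op (fun x => S x + T x).
Proof.
move=> hS hT; have [C1 [_ h1]] := bounded_pos hS; have [C2 [_ h2]] := bounded_pos hT.
case: hS => [[Sa Ss] _]; case: hT => [[Ta Ts] _].
split; first split.
- by move=> x y; rewrite Sa Ta addrACA.
- by move=> a x; rewrite Ss Ts scalerDr.
exists (C1 + C2) => x; apply: le_trans (ler_normD _ _) _.
by rewrite mulrDl; apply: lerD.
Qed.

Lemma bounded_scale (a : R) T : bounded_op T -> bounded_op (fun x => a *: T x).
Proof.
move=> hT; have [C [_ h]] := bounded_pos hT; case: hT => [[Ta Ts] _].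
split; first split.
- by move=> x y; rewrite Ta scalerDr.
- by move=> b x; rewrite Ts !scalerA mulrC.
exists (`|a| * C) => x; rewrite normrZ -mulrA; apply: ler_wpM2l => //.
Qed.

Lemma bounded_sub S T : bounded_op S -> bounded_op T ->
  bounded_op (fun x => S x - T x).
Proof.
move=> hS hT; have := bounded_add hS (bounded_scale (-1) hT).
by under eq_fun do rewrite scaleN1r.
Qed.

Lemma bounded_comp S T : bounded_op S -> bounded_op T -> bounded_op (S \o T).
Proof.
move=> hS hT; have [C1 [C10 h1]] := bounded_pos hS; have [C2 [_ h2]] := bounded_pos hT.
case: hS => [[Sa Ss] _]; case: hT => [[Ta Ts] _].
split; first split.
- by move=> x y /=; rewrite Ta Sa.
- by move=> a x /=; rewrite Ts Ss.
exists (C1 * C2) => x /=; apply: le_trans (h1 _) _; rewrite -mulrA.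
exact: ler_wpM2l.
Qed.

Lemma bounded_id : bounded_op (@id E).
Proof. by split; [split|exists 1 => x; rewrite mul1r]. Qed.

Lemma bounded_0 : bounded_op (fun _ : E => (0 : E)).
Proof.
split; first by split => [x y|a x]; rewrite ?addr0 ?scaler0.
by exists 0 => x; rewrite normr0 mul0r.
Qed.

Lemma pos_add S T : positive_op L S -> positive_op L T ->
  positive_op L (fun x => S x + T x).
Proof. by move=> h1 h2 x hx; apply: b0add; [apply: h1|apply: h2]. Qed.

Lemma pos_scale (a : R) T : 0 <= a -> positive_op L T -> positive_op L (fun x => a *: T x).
Proof. by move=> ha h x hx; apply: b0scale => //; apply: h. Qed.

Lemma pos_comp S T : positive_op L S -> positive_op L T -> positive_op L (S \o T).
Proof. by move=> h1 h2 x hx; apply: h1; apply: h2. Qed.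

Lemma pos_0 : positive_op L (fun _ => 0).
Proof. by move=> x _; exact: bref. Qed.

Lemma pos_id : positive_op L id.
Proof. by []. Qed.

Definition posLL T := [/\ bounded_op T, positive_op L T & forall x, Ea L (T x)].

Lemma rlP T : rlLwc L T <->
  exists T1 T2, [/\ posLL T1, posLL T2 & T = (fun x => T1 x - T2 x)].
Proof.
split.
  move=> [T1 [T2 [[b1 b2] [p1 p2] [l1 l2] ->]]].
  by exists T1, T2; split => //; split => // x; apply: LL_Ea.
move=> [T1 [T2 [[b1 p1 e1] [b2 p2 e2] ->]]].
by exists T1, T2; split => //; split; apply: Ea_LL.
Qed.

Lemma posLL_add S T : posLL S -> posLL T -> posLL (fun x => S x + T x).
Proof.
move=> [b1 p1 e1] [b2 p2 e2]; split.
- exact: bounded_add.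
- exact: pos_add.
- by move=> x; apply: Ea_add.
Qed.

Lemma posLL_scale (a : R) T : 0 <= a -> posLL T -> posLL (fun x => a *: T x).
Proof.
move=> ha [b p e]; split.
- exact: bounded_scale.
- exact: pos_scale.
- by move=> x; apply: Ea_scale.
Qed.

Lemma posLL_comp S T : posLL S -> posLL T -> posLL (S \o T).
Proof.
move=> [b1 p1 e1] [b2 p2 e2]; split.
- exact: bounded_comp.
- exact: pos_comp.
- by move=> x; apply: e1.
Qed.

Lemma posLL_0 : posLL (fun _ => 0).
Proof. split; [exact: bounded_0|exact: pos_0|move=> _; exact: Ea0]. Qed.

Lemma part_i :
  ( (forall T, rlLwc L T -> regular_op L T)
    /\ rlLwc L (fun _ => 0)
    /\ (forall S T, rlLwc L S -> rlLwc L T -> rlLwc L (fun x => S x + T x))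
    /\ (forall (a : R) T, rlLwc L T -> rlLwc L (fun x => a *: T x))
    /\ (forall S T, rlLwc L S -> rlLwc L T -> rlLwc L (S \o T)) )
  /\ ( (forall T, rlLwc L T <-> regular_op L T) <-> limitedly_Lwc L id ).
Proof.
have rl_reg T : rlLwc L T -> regular_op L T.
  by move=> [T1 [T2 [[b1 b2] [p1 p2] _ ->]]]; exists T1, T2.
split.
split; first exact: rl_reg.
split.
- apply/rlP; exists (fun _ => 0), (fun _ => 0); split; try exact: posLL_0.
  by apply: funext => x; rewrite subrr.
split.
- move=> S T /rlP [S1 [S2 [h1 h2 ->]]] /rlP [T1 [T2 [h3 h4 ->]]].
  apply/rlP; exists (fun x => S1 x + T1 x), (fun x => S2 x + T2 x).
  split; try exact: posLL_add.
  by apply: funext => x; rewrite zt4.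
split.
- move=> a T /rlP [T1 [T2 [h1 h2 ->]]]; apply/rlP.
  have [a0|a0] := leP 0 a.
    exists (fun x => a *: T1 x), (fun x => a *: T2 x).
    split; try exact: posLL_scale.
    by apply: funext => x; rewrite scalerBr.
  exists (fun x => (- a) *: T2 x), (fun x => (- a) *: T1 x).
  split; try (apply: posLL_scale => //; rewrite oppr_ge0 ltW //).
  by apply: funext => x; rewrite scalerBr !scaleNr opprK addrC.
- move=> S T /rlP [S1 [S2 [h1 h2 ->]]] /rlP [T1 [T2 [h3 h4 ->]]].
  apply/rlP.
  exists (fun x => (S1 \o T1) x + (S2 \o T2) x), (fun x => (S1 \o T2) x + (S2 \o T1) x).
  split; try (apply: posLL_add; apply: posLL_comp => //).
  apply: funext => x /=.
  case: h1 => [[[S1a S1s] _] _ _]; case: h2 => [[[S2a S2s] _] _ _].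
  rewrite (linB _ _ (conj S1a S1s)) (linB _ _ (conj S2a S2s)).
  by rewrite opprB zt4.
split.
- move=> h; apply: Ea_LL; first exact: bounded_id.
  have [T1 [T2 [[b1 p1 e1] [b2 p2 e2] eT]]] : exists T1 T2,
      [/\ posLL T1, posLL T2 & id = (fun x => T1 x - T2 x)].
    apply/rlP; apply/h; exists id, (fun _ => 0); split => //.
    - exact: bounded_id.
    - exact: bounded_0.
    - exact: pos_0.
    - by apply: funext => x; rewrite subr0.
  move=> x; have -> : x = T1 x - T2 x by rewrite -[LHS]/(id x) eT.
  exact: Ea_sub.
move=> hid T; split; first exact: rl_reg.
move=> [T1 [T2 [b1 b2 p1 p2 ->]]]; apply/rlP; exists T1, T2; split => //.
- by split => // x; exact: (LL_Ea (x := T1 x) hid).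
- by split => // x; exact: (LL_Ea (x := T2 x) hid).
Qed.

End Ops.

Import Order.TTheory GRing.Theory Num.Theory.
Import numFieldNormedType.Exports.
Set Implicit Arguments. Unset Strict Implicit. Unset Printing Implicit Defensive.
Local Open Scope ring_scope.
Local Open Scope classical_set_scope.

Section Part2.
Variables (R : realType) (E : normedModType R) (L : BanachLatticeOn E).
Local Notation le := (ble L).
Local Notation mt := (bmeet L).
Local Notation ab := (labs L).
Implicit Types S T U M : E -> E.

Lemma reg_bounded T : regular_op L T -> bounded_op T.
Proof. by move=> [T1 [T2 [b1 b2 _ _ ->]]]; apply: bounded_sub. Qed.

Lemma half_le a b : le (a + a) (b + b) -> le a b.
Proof.
move=> h; apply: bsub2; apply: b0half; rewrite -zt2.
exact: bsub1.
Qed.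

Lemma ab_addK y : le 0 (ab y + y).
Proof.
have := bsub1 (ab_ubr (L:=L) y); by rewrite opprK.
Qed.
Lemma ab_subK y : le 0 (ab y - y).
Proof. exact: bsub1 (ab_ubl y). Qed.

Lemma pos_abs V y : lin_map V -> positive_op L V -> le (ab (V y)) (V (ab y)).
Proof.
move=> hl hp; apply: ab_le.
  apply: bsub2; rewrite opprK -(proj1 hl) addrC.
  exact/hp/ab_addK.
by apply: bsub2; rewrite -linB //; exact/hp/ab_subK.
Qed.

Lemma mod_abs U M y : lin_map U -> lin_map M -> op_le L U M ->
  op_le L (fun x => - U x) M -> le (ab (U y)) (M (ab y)).
Proof.
move=> hU hM h1 h2.
pose p := ab y + y; pose q := ab y - y.
have hp : le 0 p by exact: ab_addK.
have hq : le 0 q by exact: ab_subK.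
have e1 : p - q = y + y by rewrite /p /q zt3.
have e2 : p + q = ab y + ab y by rewrite /p /q addrACA subrr addr0.
have hpU : le (U p) (M p) by apply: bsub2; exact: h1.
have hqU : le (U q) (M q) by apply: bsub2; exact: h1.
have hpN : le (- U p) (M p) by apply: bsub2; exact: h2.
have hqN : le (- U q) (M q) by apply: bsub2; exact: h2.
apply: ab_le.
  apply/boppP; rewrite opprK; apply: half_le.
  rewrite -opprD -(proj1 hU) -(proj1 hM) -e1 -e2 linB // opprB (proj1 hM).
  by rewrite addrC; apply: badd.
apply: half_le.
rewrite -(proj1 hU) -(proj1 hM) -e1 -e2 linB // (proj1 hM).
exact: badd.
Qed.

Lemma mod_pos T M : op_le L T M -> op_le L (fun x => - T x) M -> positive_op L M.
Proof.
move=> h1 h2 x hx; apply: b0half.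
have := badd (h1 x hx) (h2 x hx).
by rewrite addr0 opprK addrACA addNr addr0.
Qed.

Lemma part_iia S T MS MT : regular_op L S -> rlLwc L T ->
  is_op_modulus L S MS -> is_op_modulus L T MT -> op_le L MS MT -> rlLwc L S.
Proof.
move=> hS /rlP [T1 [T2 [[b1 p1 e1] [b2 p2 e2] eT]]] [rMS lS lNS _]
  [rMT lT lNT leastT] hle.
have bMS := reg_bounded rMS; have bS := reg_bounded hS.
have pMS : positive_op L MS by apply: mod_pos lS lNS.
have hMT : op_le L MT (fun x => T1 x + T2 x).
  apply: leastT.
  - exists (fun x => T1 x + T2 x), (fun _ => 0); split.
    + exact: bounded_add.
    + exact: bounded_0.
    + exact: pos_add.
    + exact: pos_0.
    + by apply: funext => x; rewrite subr0.
  - by move=> x hx; rewrite eT /= zt3; apply: b0add; apply: p2.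
  - move=> x hx; rewrite eT /= opprK addrACA subrr addr0.
    by apply: b0add; apply: p1.
have key x : le (MS (ab x)) (T1 (ab x) + T2 (ab x)).
  apply: (btr (y := MT (ab x))); apply: bsub2.
    exact/hle/ab_ge0.
  exact/hMT/ab_ge0.
have hz x : le 0 (T1 (ab x) + T2 (ab x)).
  by apply: b0add; [apply: p1|apply: p2]; exact: ab_ge0.
have hEz x : Ea L (T1 (ab x) + T2 (ab x)) by apply: Ea_add.
have EMS x : Ea L (MS x).
  apply: (Ea_solid _ (hEz x)); rewrite (ab_pos (hz x)).
  apply: btr (key x); apply: pos_abs => //; exact: bMS.1.
have ES x : Ea L (S x).
  apply: (Ea_solid _ (hEz x)); rewrite (ab_pos (hz x)).
  apply: btr (key x); apply: mod_abs => //; [exact: bS.1|exact: bMS.1].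
apply/rlP; exists MS, (fun x => MS x - S x); split.
- by split.
- split; [exact: bounded_sub|exact: lS|move=> x; exact: Ea_sub].
- by apply: funext => x; rewrite zt1.
Qed.

End Part2.

Import Order.TTheory GRing.Theory Num.Theory.
Import numFieldNormedType.Exports.
Set Implicit Arguments. Unset Strict Implicit. Unset Printing Implicit Defensive.
Local Open Scope ring_scope.
Local Open Scope classical_set_scope.

Lemma zt5 (V : zmodType) (a b c d : V) : a + b = c + d -> a - c = d - b.
Proof.
move=> h; apply/eqP; rewrite subr_eq eq_sym addrAC subr_eq.
by rewrite [d + c]addrC -h.
Qed.

Section RK.
Variables (R : realType) (E : normedModType R) (L : BanachLatticeOn E).
Local Notation le := (ble L).
Local Notation mt := (bmeet L).
Local Notation ab := (labs L).
Variables (T P Q : E -> E).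
Hypotheses (DC : dedekind_complete L) (bP : bounded_op P) (bQ : bounded_op Q)
  (pP : positive_op L P) (pQ : positive_op L Q) (eT : T = fun x => P x - Q x).

Lemma bT : bounded_op T. Proof. by rewrite eT; apply: bounded_sub. Qed.
Lemma linT : lin_map T. Proof. exact: bT.1. Qed.

Lemma pos_mono V u y : lin_map V -> positive_op L V -> le y u -> le (V y) (V u).
Proof. by move=> hl hp h; apply: bsub2; rewrite -linB //; apply/hp/bsub1. Qed.

Lemma T_le_P y u : le 0 y -> le y u -> le (T y) (P u).
Proof.
move=> h0 h1; rewrite eT; apply: (btr (y := P y)).
  apply: bsub2; rewrite opprB addrC subrK; exact: pQ.
exact: pos_mono bP.1 pP h1.
Qed.

Lemma lsr a b w : le a (w - b) -> le (a + b) w.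
Proof. by move/(baddr b); rewrite subrK. Qed.
Lemma lsr' a b w : le (a + b) w -> le a (w - b).
Proof. by move/(baddr (- b)); rewrite addrK. Qed.
Lemma lsw a b w : le a (w - b) -> le b (w - a).
Proof. by move/lsr; rewrite addrC; apply: lsr'. Qed.

Definition RKp u s := (forall y, le 0 y -> le y u -> le (T y) s) /\
  (forall z, (forall y, le 0 y -> le y u -> le (T y) z) -> le s z).

Lemma RK_ex u : exists s, le 0 u -> RKp u s.
Proof.
have [hu|hu] := pselect (le 0 u); last by exists 0.
have ne : T @` [set y | le 0 y /\ le y u] !=set0.
  by exists (T 0), 0; split => //; exact: bref.
have ub : exists w, forall a, (T @` [set y | le 0 y /\ le y u]) a -> le a w.
  by exists (P u) => _ [y [y0 yu] <-]; apply: T_le_P.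
have [s [s1 s2]] := DC ne ub.
exists s => _; split.
  by move=> y y0 yu; apply: s1; exists y.
by move=> z hz; apply: s2 => _ [y [y0 yu] <-]; apply: hz.
Qed.

Definition R0 u := projT1 (choice RK_ex) u.
Lemma R0P u : le 0 u -> RKp u (R0 u).
Proof. exact: (projT2 (choice RK_ex) u). Qed.

Lemma R0_ub u y : le 0 y -> le y u -> le (T y) (R0 u).
Proof. by move=> h0 h1; apply: (R0P (btr h0 h1)).1. Qed.
Lemma R0_least u z : le 0 u ->
  (forall y, le 0 y -> le y u -> le (T y) z) -> le (R0 u) z.
Proof. by move=> hu; apply: (R0P hu).2. Qed.

Lemma T0 : T 0 = 0. Proof. exact: lin0 linT. Qed.

Lemma R0_ge0 u : le 0 u -> le 0 (R0 u).
Proof. by move=> hu; have := R0_ub (bref 0) hu; rewrite T0. Qed.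

Lemma R0_le_P u : le 0 u -> le (R0 u) (P u).
Proof. by move=> hu; apply: R0_least => // y; apply: T_le_P. Qed.

Lemma R0_add u v : le 0 u -> le 0 v -> R0 (u + v) = R0 u + R0 v.
Proof.
move=> hu hv; have huv := b0add hu hv.
apply: banti.
  apply: R0_least => // y y0 yuv.
  have [h1 h2 h3] := riesz y0 hu hv yuv.
  rewrite -(subrK (mt y u) y) addrC (proj1 linT); apply: badd.
    apply: R0_ub; [exact: mt0_pos|exact: mt_lbr].
  exact: R0_ub.
have h : forall y1, le 0 y1 -> le y1 u -> le (R0 v) (R0 (u + v) - T y1).
  move=> y1 y10 y1u; apply: R0_least => // y2 y20 y2v.
  apply: lsw; apply: lsr'; rewrite -(proj1 linT).
  apply: R0_ub; [exact: b0add|exact: badd].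
apply: lsr; apply: R0_least => // y1 y10 y1u; apply: lsw; exact: h.
Qed.

Lemma R0_scale (t : R) u : 0 <= t -> le 0 u -> R0 (t *: u) = t *: R0 u.
Proof.
move=> t0 hu; have [->|tn] := eqVneq t 0.
  rewrite !scale0r; apply: banti; last exact: R0_ge0 (bref 0).
  apply: R0_least; first exact: bref.
  by move=> y y0 y1; rewrite (banti y1 y0) T0; exact: bref.
have tp : 0 < t by rewrite lt0r tn.
have ti : 0 <= t^-1 by rewrite invr_ge0.
have hsc (y : E) : t *: (t^-1 *: y) = y by rewrite scalerA mulfV ?scale1r.
have hsc' (y : E) : t^-1 *: (t *: y) = y by rewrite scalerA mulVf ?scale1r.
apply: banti.
  apply: R0_least; first exact: b0scale.
  move=> y y0 y1; rewrite -(hsc y) (proj2 linT); apply: bscale => //.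
  apply: R0_ub; first exact: b0scale.
  by rewrite -(hsc' u); apply: bscale.
rewrite -[R0 (t *: u)]hsc; apply: bscale => //.
apply: R0_least => // y y0 y1.
rewrite -(hsc' y) (proj2 linT); apply: bscale => //.
apply: R0_ub; [exact: b0scale|exact: bscale].
Qed.

Definition RR x := R0 (ab x + x) - R0 (ab x).

Lemma RR_diff u v : le 0 u -> le 0 v -> RR (u - v) = R0 u - R0 v.
Proof.
move=> hu hv; rewrite /RR; apply: zt5.
rewrite -!R0_add //; [|exact: ab_ge0|exact: ab_addK].
by rewrite -addrA subrK.
Qed.

Lemma RR_pos_eq u : le 0 u -> RR u = R0 u.
Proof.
move=> hu; have := RR_diff hu (bref 0); rewrite subr0 => ->.
have -> : R0 0 = 0.
  by have := R0_scale (ler0n R 0) (bref 0); rewrite !scale0r.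
by rewrite subr0.
Qed.

Lemma RR_lin : lin_map RR.
Proof.
split.
  move=> x y.
  have -> : x + y = ((ab x + x) + (ab y + y)) - (ab x + ab y).
    by rewrite addrACA [ab x + ab y + _]addrC addrK.
  rewrite RR_diff; last by apply: b0add; exact: ab_ge0.
    rewrite (R0_add (ab_addK L x) (ab_addK L y)) (R0_add (ab_ge0 x) (ab_ge0 y)).
    by rewrite /RR zt4.
  by apply: b0add; exact: ab_addK.
move=> a x; have [a0|a0] := leP 0 a.
  have -> : a *: x = a *: (ab x + x) - a *: ab x.
    by rewrite -scalerBr [ab x + x]addrC addrK.
  rewrite RR_diff; [|exact: b0scale (ab_addK L x)|exact: b0scale (ab_ge0 x)].
  by rewrite (R0_scale a0 (ab_addK L x)) (R0_scale a0 (ab_ge0 x)) -scalerBr.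
have na : 0 <= - a by rewrite oppr_ge0 ltW.
have -> : a *: x = (- a) *: ab x - (- a) *: (ab x + x).
  by rewrite -scalerBr opprD addNKr scaleNr scalerN opprK.
rewrite RR_diff; [|exact: b0scale (ab_ge0 x)|exact: b0scale (ab_addK L x)].
rewrite (R0_scale na (ab_ge0 x)) (R0_scale na (ab_addK L x)).
by rewrite -scalerBr scaleNr -scalerN opprB.
Qed.

Lemma R00 : R0 0 = 0.
Proof. by have := R0_scale (ler0n R 0) (bref 0); rewrite !scale0r. Qed.

Lemma RR_pos : positive_op L RR.
Proof. by move=> x hx; rewrite RR_pos_eq //; exact: R0_ge0. Qed.

Lemma RR_geT : positive_op L (fun x => RR x - T x).
Proof.
move=> x hx; rewrite RR_pos_eq //; apply: bsub1; apply: R0_ub => //; exact: bref.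
Qed.

Lemma R0_norm u : le 0 u -> `|R0 u| <= `|P u|.
Proof. by move=> hu; apply: bnorm_mono; [exact: R0_ge0|exact: R0_le_P]. Qed.

Lemma RR_bounded : bounded_op RR.
Proof.
split; first exact: RR_lin.
have [C [C0 hC]] := bounded_pos bP.
exists (C + C + C) => x.
have h1 : `|RR x| <= `|R0 (ab x + x)| + `|R0 (ab x)|.
  by rewrite /RR; apply: le_trans (ler_normB _ _) _.
have h2 : `|R0 (ab x + x)| <= C * (`|x| + `|x|).
  apply: le_trans (R0_norm (ab_addK L x)) _; apply: le_trans (hC _) _.
  apply: ler_wpM2l => //; apply: le_trans (ler_normD _ _) _.
  by rewrite bnorm_ab.
have h3 : `|R0 (ab x)| <= C * `|x|.
  apply: le_trans (R0_norm (ab_ge0 x)) _; apply: le_trans (hC _) _.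
  by rewrite bnorm_ab.
nra.
Qed.

End RK.

Import Order.TTheory GRing.Theory Num.Theory.
Import numFieldNormedType.Exports.
Set Implicit Arguments. Unset Strict Implicit. Unset Printing Implicit Defensive.
Local Open Scope ring_scope.
Local Open Scope classical_set_scope.

Lemma opnorm_bound (R : realType) (E : normedModType R) (M : E -> E) x :
  bounded_op M -> `|M x| <= op_norm M * `|x|.
Proof.
move=> hM; have [C [C0 hC]] := bounded_pos hM.
have lM : lin_map M by case: hM.
have hS : has_sup [set `|M z| | z in [set z : E | `|z| <= 1]].
  split; first by exists `|M 0|, 0 => //=; rewrite normr0.
  exists C => _ [z hz <-]; apply: le_trans (hC z) _.
  by rewrite -[X in _ <= X]mulr1; apply: ler_wpM2l.
have [->|x0] := eqVneq x 0.
  by rewrite (lin0 lM) !normr0 mulr0.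
have nx : 0 < `|x| by rewrite normr_gt0.
have hz : `| (`|x|^-1 *: x) | <= 1.
  by rewrite normrZ ger0_norm ?invr_ge0 // mulVf ?normr_eq0.
have h : `|M (`|x|^-1 *: x)| <= op_norm M.
  by apply: (sup_upper_bound hS); exists (`|x|^-1 *: x).
rewrite (proj2 lM) normrZ ger0_norm ?invr_ge0 // in h.
have := ler_wpM2r (ltW nx) h.
by rewrite mulrAC mulVf ?normr_eq0 // mul1r.
Qed.

Section IIB.
Variables (R : realType) (E : normedModType R) (L : BanachLatticeOn E).
Local Notation le := (ble L).
Local Notation mt := (bmeet L).
Local Notation ab := (labs L).
Variables (Tn : nat -> E -> E) (T : E -> E) (Mn : nat -> E -> E) (P Q : E -> E).
Variables (A B : nat -> E -> E).
Hypotheses (DC : dedekind_complete L) (bP : bounded_op P) (bQ : bounded_op Q)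
  (pP : positive_op L P) (pQ : positive_op L Q) (eT : T = fun x => P x - Q x)
  (hA : forall n, posLL L (A n)) (hB : forall n, posLL L (B n))
  (eTn : forall n, Tn n = fun x => A n x - B n x)
  (hMn : forall n, is_op_modulus L (fun x => Tn n x - T x) (Mn n))
  (hcv : (fun n => op_norm (Mn n)) @ \oo --> (0 : R)).

Lemma bTT : bounded_op T. Proof. by rewrite eT; apply: bounded_sub. Qed.
Lemma bTn n : bounded_op (Tn n).
Proof. by rewrite eTn; case: (hA n) => ? _ _; case: (hB n) => ? _ _; apply: bounded_sub. Qed.
Lemma bMn n : bounded_op (Mn n). Proof. by case: (hMn n) => /reg_bounded. Qed.
Lemma pMn n : positive_op L (Mn n).
Proof. by case: (hMn n) => _ h1 h2 _; apply: mod_pos h1 h2. Qed.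

Lemma small (d : R) x : 0 < d -> exists n, `|Mn n x| <= d.
Proof.
move=> d0; have /cvg0P h := hcv.
have nx : 0 < `|x| + 1 by rewrite ltr_pwDr // normr_ge0.
have [N hN] := h (d / (`|x| + 1)) (divr_gt0 d0 nx).
exists N; apply: le_trans (opnorm_bound _ (bMn N)) _.
have h1 : op_norm (Mn N) <= d / (`|x| + 1).
  by apply: le_trans (ler_norm _) (hN N (leqnn N)).
apply: le_trans (ler_wpM2r (normr_ge0 x) h1) _.
rewrite mulrAC ler_pdivrMr //; apply: ler_wpM2l; [exact: ltW|by rewrite lerDl].

Qed.

Lemma EaT x : Ea L (T x).
Proof.
apply: Ea_approx => d d0; have [n hn] := small (ab x) d0.
exists (Tn n x), (Mn n (ab x)); split => //.
- rewrite eTn; apply: Ea_sub; [case: (hA n)|case: (hB n)] => _ _; exact.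
- have -> : T x = Tn n x - (Tn n x - T x) by rewrite zt1.
  apply: btr (ab_triangle _ _) _; apply: badd; first exact: bref.
  rewrite abN (ab_pos (@pMn n _ (ab_ge0 x))).
  case: (hMn n) => _ h1 h2 _; apply: mod_abs h1 h2.
  + exact: (bounded_sub (bTn n) bTT).1.
  + exact: (bMn n).1.
Qed.

Local Notation R0' := (R0 DC bP pP pQ eT).
Local Notation RR' := (RR DC bP pP pQ eT).

Lemma R0_dom n u : le 0 u -> le (R0' u) (A n u + Mn n u).
Proof.
move=> hu; apply: R0_least => // y y0 yu.
have -> : T y = Tn n y - (Tn n y - T y) by rewrite zt1.
apply: badd.
  rewrite eTn; apply: (btr (y := A n y)).
    by apply: bsub2; rewrite opprB addrC subrK; case: (hB n) => _ hp _; apply: hp.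
  case: (hA n) => [[hl _] hp _]; exact: pos_mono hl hp yu.
apply: (btr (y := Mn n y)).
  by case: (hMn n) => _ _ h2 _; apply: bsub2; apply: h2.
exact: pos_mono (bMn n).1 (pMn n) yu.
Qed.

Lemma Ea_R0 u : le 0 u -> Ea L (R0' u).
Proof.
move=> hu; apply: Ea_approx => d d0; have [n hn] := small u d0.
exists (A n u), (Mn n u); split => //.
- by case: (hA n) => _ _; exact.
- rewrite (ab_pos (R0_ge0 DC bP bQ pP pQ eT hu)).
  rewrite (ab_pos (@pMn n _ hu)).
  have -> : ab (A n u) = A n u by apply: ab_pos; case: (hA n) => _ hp _; apply: hp.
  exact: R0_dom.
Qed.

Lemma Ea_RR x : Ea L (RR' x).
Proof. by apply: Ea_sub; apply: Ea_R0; [exact: ab_addK|exact: ab_ge0]. Qed.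

Lemma iib_main : rlLwc L T.
Proof.
apply/rlP; exists RR', (fun x => RR' x - T x); split.
- split; [exact: RR_bounded|exact: RR_pos|exact: Ea_RR].
- split; [exact: bounded_sub (RR_bounded _ _ _ _ _ _) bTT|exact: RR_geT|].
  by move=> x; apply: Ea_sub; [exact: Ea_RR|exact: EaT].
- by apply: funext => x; rewrite zt1.
Qed.

End IIB.

Unset Implicit Arguments.
Import Order.TTheory GRing.Theory Num.Theory.
Import numFieldNormedType.Exports.
Local Open Scope ring_scope.
Local Open Scope classical_set_scope.

Theorem theorem3p7 (R : realType) (E : completeNormedModType R)
    (L : BanachLatticeOn E) :
  (* (i) r-l-Lwc(E) is a subalgebra of L_r(E) *)
  ( (forall T, rlLwc L T -> regular_op L T)
    /\ rlLwc L (fun _ => 0)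
    /\ (forall S T, rlLwc L S -> rlLwc L T -> rlLwc L (fun x => S x + T x))
    /\ (forall (a : R) T, rlLwc L T -> rlLwc L (fun x => a *: T x))
    /\ (forall S T, rlLwc L S -> rlLwc L T -> rlLwc L (S \o T)) )
  /\ ( (forall T, rlLwc L T <-> regular_op L T) <-> limitedly_Lwc L id )
  (* (ii) for Dedekind complete E: closed order ideal of (L_r(E), ||.||_r) *)
  /\ ( dedekind_complete L ->
       (forall S T MS MT, regular_op L S -> rlLwc L T ->
          is_op_modulus L S MS -> is_op_modulus L T MT -> op_le L MS MT ->
          rlLwc L S)
       /\ (forall (Tn : nat -> E -> E) (T : E -> E) (Mn : nat -> E -> E),
          (forall n, rlLwc L (Tn n)) -> regular_op L T ->
          (forall n, is_op_modulus L (fun x => Tn n x - T x) (Mn n)) ->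
          (fun n => op_norm (Mn n)) @ \oo --> (0 : R) ->
          rlLwc L T) ).
Proof.
have [hi hii] := part_i L.
split; first exact: hi.
split; first exact: hii.
move=> DC; split.
  by move=> S T MS MT; apply: part_iia.
move=> Tn T Mn hTn hT hMn hcv.
have [P [Q [bP bQ pP pQ eT]]] := hT.
have hAB : forall n, exists AB : (E -> E) * (E -> E),
    [/\ posLL L AB.1, posLL L AB.2 & Tn n = (fun x => AB.1 x - AB.2 x)].
  by move=> n; have /rlP [A [B [h1 h2 h3]]] := hTn n; exists (A, B).
have [AB hAB'] := choice hAB.
apply: (@iib_main _ _ L Tn T Mn P Q (fun n => (AB n).1) (fun n => (AB n).2)
  DC bP bQ pP pQ eT) => //.
- by move=> n; case: (hAB' n).
- by move=> n; case: (hAB' n).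
- by move=> n; case: (hAB' n).
Qed.
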